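(* $\mathfrak{b}\leq\mathfrak{s}(\mathbb{R})$.
   Context: $\mathfrak{b}$ is the bounding number: the smallest cardinality of a family of functions $\omega\to\omega$ not bounded by a single function modulo finite (i.e. no $f$ with $g<^*f$ for all members $g$, where $g<^*f$ means $g(n)<f(n)$ for all but finitely many $n$). For infinite sets $U, A$, say $U$ splits $A$ if both $A\cap U$ and $A\setminus U$ are infinite. $\mathfrak{s}(\mathbb{R})$ is the smallest cardinality of a family $\mathcal{U}$ of open subsets of $\mathbb{R}$ (usual topology) such that every infinite $A\subseteq\mathbb{R}$ is split by some $U\in\mathcal{U}$. *)

(* Defs.v *)
From HB Require Import structures.
From mathcomp Require Import all_boot all_order all_algebra.
From mathcomp Require Import all_classical all_reals all_analysis.
Set Implicit Arguments. Unset Strict Implicit. Unset Printing Implicit Defensive.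
Import Order.TTheory GRing.Theory Num.Theory numFieldNormedType.Exports.
Local Open Scope classical_set_scope.

Definition lt_star (g f : nat -> nat) : Prop :=
  exists N : nat, forall n : nat, (N <= n)%N -> (g n < f n)%N.

Definition unbounded_family (G : set (nat -> nat)) : Prop :=
  ~ exists f : nat -> nat, forall g, G g -> lt_star g f.

Definition splits {T : Type} (U A : set T) : Prop :=
  infinite_set (A `&` U) /\ infinite_set (A `\` U).

Definition open_splitting_family (R : realType) (UU : set (set R)) : Prop :=
  (forall U, UU U -> open U) /\
  (forall A : set R, infinite_set A -> exists2 U, UU U & splits U A).

(* Main.v *)
Require Import Defs.
From HB Require Import structures.
From mathcomp Require Import all_boot all_order all_algebra.
From mathcomp Require Import all_classical all_reals all_analysis.
From mathcomp Require Import zify ring lra.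
Import Order.TTheory GRing.Theory Num.Theory numFieldNormedType.Exports.
Local Open Scope classical_set_scope.
Local Open Scope ring_scope.
Section S.
Variable R : realType.
Definition rad (r : nat) : R := ((2 ^ r)%:R)^-1.

Lemma rad_gt0 r : 0 < rad r.
Proof. by rewrite /rad invr_gt0 ltr0n expn_gt0. Qed.

Lemma rad_le a b : (b <= a)%N -> rad a <= rad b.
Proof.
move=> ba; rewrite /rad lef_pV2 ?posrE ?ltr0n ?expn_gt0 // ler_nat leq_pexp2l //.
Qed.

Lemma radS a : rad a.+1 * 2 = rad a.
Proof.
rewrite /rad expnS natrM invfM mulrAC mulVf ?mul1r //.
Qed.

Lemma exists_rad (U : set R) (q : R) : open U -> U q ->
  exists r, forall y, `|q - y| < rad r -> U y.
Proof.
move=> oU Uq.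
have : nbhs q U by apply: open_nbhs_nbhs; split.
move=> /nbhs_ballP [e /= e0 eU].
have [n Hn] : exists n : nat, e^-1 < n%:R.
  exists (Num.bound e^-1); apply: archi_boundP; rewrite invr_ge0 ltW //.
exists n => y Hy; apply: eU.
rewrite /ball /=.
apply: (lt_le_trans Hy).
rewrite /rad -[e]invrK lef_pV2 ?posrE ?invr_gt0 ?ltr0n ?expn_gt0 //.
apply: (le_trans (ltW Hn)); rewrite ler_nat; apply: ltnW; exact: ltn_expl.
Qed.

Definition rU (U : set R) (q : R) : nat :=
  match pselect (exists r, forall y, `|q - y| < rad r -> U y) with
  | left h => projT1 (cid h) | right _ => 0%N end.

Lemma rUP (U : set R) q : (exists r, forall y, `|q - y| < rad r -> U y) ->
  forall y, `|q - y| < rad (rU U q) -> U y.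
Proof.
move=> h; rewrite /rU; case: pselect => [h'|//].
exact: (projT2 (cid h')).
Qed.

Definition gU (U : set R) (n : nat) : nat :=
  \max_(m < 2 ^ n) rU U ((m : nat)%:R / (2 ^ n)%:R).

Section Seq.
Variable f : nat -> nat.
Fixpoint nn j : nat := if j is j'.+1 then (f (nn j') + nn j').+1 else 1%N.
Fixpoint cc j : nat := if j is j'.+1 then (cc j' * 2 ^ (f (nn j')).+1).+1 else 1%N.
Definition p j : R := (cc j)%:R / (2 ^ nn j)%:R.

Lemma nn_gt j : (j < nn j)%N.
Proof. elim: j => [//|j IH] /=; rewrite ltnS; exact: leq_trans IH (leq_addl _ _). Qed.

Lemma nnS j : nn j.+1 = (nn j + (f (nn j)).+1)%N.
Proof. by rewrite /= addnS addnC. Qed.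

Lemma cc_lt j : (cc j < 2 ^ nn j)%N.
Proof.
elim: j => [//|j IH]; rewrite nnS expnD /=.
have h2 : (2 <= 2 ^ (f (nn j)).+1)%N.
  by rewrite expnS leq_pmulr // expn_gt0.
move: h2 IH; set X := (2 ^ (f (nn j)).+1)%N; set Y := (2 ^ nn j)%N; move=> h2 IH.
nia.
Qed.

Lemma pS j : p j.+1 = p j + rad (nn j.+1).
Proof.
rewrite /p /rad nnS /= expnD -addn1 !natrD !natrM.
have h1 : (2 ^ nn j)%:R != 0 :> R by rewrite pnatr_eq0 expn_eq0.
have h2 : (2 ^ (f (nn j)).+1)%:R != 0 :> R by rewrite pnatr_eq0 expn_eq0.
by field; rewrite h1 h2.
Qed.

Lemma step m : p m.+1 + rad (nn m.+1) <= p m + rad (nn m).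
Proof.
rewrite pS -addrA lerD2l -(radS (nn m)) mulr_natr mulr2n.
by apply: lerD; apply: rad_le; rewrite nnS addnS ltnS leq_addr.
Qed.

Lemma steps j k : p (j + k) + rad (nn (j + k)) <= p j + rad (nn j).
Proof.
elim: k => [|k IH]; first by rewrite addn0.
by rewrite addnS; apply: le_trans (step _) IH.
Qed.

Lemma p_incr j k : p j < p (j + k.+1).
Proof.
elim: k => [|k IH]; first by rewrite addn1 pS ltrDl rad_gt0.
by rewrite addnS pS; apply: (lt_trans IH); rewrite ltrDl rad_gt0.
Qed.

Lemma p_inj : injective p.
Proof.
move=> a b hab; case: (ltngtP a b) => // h.
- by have := p_incr a (b - a.+1); rewrite addnS -addSn subnKC // hab ltxx.
- by have := p_incr b (a - b.+1); rewrite addnS -addSn subnKC // hab ltxx.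
Qed.

Lemma dist j k : `|p j - p (j + k.+1)| < rad (f (nn j)).
Proof.
rewrite distrC ger0_norm; last by rewrite subr_ge0 ltW // p_incr.
have e : p (j + k.+1) = p (j.+1 + k) by rewrite addnS addSn.
have h := steps j.+1 k.
have r0 := rad_gt0 (nn (j.+1 + k)).
have h2 : rad (nn j.+1) * 2 <= rad (f (nn j)).
  by rewrite nnS addnS radS; apply: rad_le; exact: leq_addl.
move: h; rewrite pS e => h.
lra.
Qed.
End Seq.

Lemma main (UU : set (set R)) : open_splitting_family UU ->
  exists G : set (nat -> nat), unbounded_family G /\ (G #<= UU)%card.
Proof.
move=> [oUU spl].
exists ((fun U => gU U) @` UU); split; last exact: card_image_le.
move=> [f Hf].
pose A := range (p f).
have infA : infinite_set A.
  move=> finA; apply: infinite_nat; apply: (card_le_finite _ finA).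
  have := inj_card_eq (f := p f) (A := setT) (in2W (@p_inj f)).
  by rewrite card_eq_le => /andP[_].
have [U UUU [sI sD]] := spl A infA.
have [N HN] := Hf (gU U) (ex_intro2 _ _ U UUU erefl).
have key : forall j, (N <= j)%N -> U (p f j) -> forall k, U (p f (j + k.+1)).
  move=> j Nj Uj k; apply: (rUP U (p f j) (exists_rad U (p f j) (oUU U UUU) Uj)).
  apply: lt_le_trans (dist f j k) _; apply: rad_le.
  apply: leq_trans (ltnW (HN _ _)); last first.
    exact: leq_trans Nj (ltnW (nn_gt f j)).
  exact: (leq_bigmax (Ordinal (cc_lt f j))).
case: (pselect (exists j, (N <= j)%N /\ U (p f j))) => [[j [Nj Uj]] | nU].
- apply: sD; apply: (@sub_finite_set _ _ (p f @` `I_j.+1)); last first.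
    exact: finite_image (finite_II _).
  move=> x [[i _ <-] nUx]; exists i => //=.
  case: (ltnP i j.+1) => // ji; exfalso; apply: nUx.
  by have := key j Nj Uj (i - j.+1)%N; rewrite addnS -addSn subnKC.
- apply: sI; apply: (@sub_finite_set _ _ (p f @` `I_N)); last first.
    exact: finite_image (finite_II _).
  move=> x [[i _ <-] Ux]; exists i => //=.
  by case: (ltnP i N) => // Ni; exfalso; apply: nU; exists i.
Qed.
End S.

Local Open Scope card_scope.

Theorem theorem3p2 (R : realType) (UU : set (set R)) :
  open_splitting_family UU ->
  exists G : set (nat -> nat), unbounded_family G /\ (G #<= UU).
Proof. exact: main. Qed.
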